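(* Let $n\ge1$, $p\in(0,1]$ and $q\in[n]$. Then $\gamma_n^*\ge\big(1-(1-p)^q\big)\gamma_{n,q}^*$.
   Context: For $q\in[n]$, $\gamma_{n,q}^*$ is the optimal value of $(LP)_{n,p,q}$: maximize $\gamma$ over $\mathbf x=(x_{t,s})_{t\in[n],s\in[t]}\ge0$ and $\gamma$ subject to $x_{t,s}\le\frac1t\big(1-p\sum_{\tau=1}^{t-1}\sum_{\sigma=1}^\tau x_{\tau,\sigma}\big)$ for all $t\in[n],s\in[t]$, and $\gamma\le\frac{p}{1-(1-p)^k}\sum_{t=1}^n\sum_{s=1}^tx_{t,s}P_{t,s,k}$ for all $k\in[q]$, where $P_{t,s,k}=\sum_{i=s}^{\min(k,n-t+s)}\binom{i-1}{s-1}\binom{n-i}{t-s}/\binom nt$ (the probability that the $t$-th of $n$ uniformly randomly ordered ranked candidates has overall rank $\le k$ given that its rank among the first $t$ is $s$). $\gamma_n^*=\gamma_{n,n}^*$ is the optimal value of the same program with $k$ ranging over all of $[n]$. *)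

(* Defs.v *)
From HB Require Import structures.
From mathcomp Require Import all_boot all_order all_algebra.
From mathcomp Require Import all_classical all_reals.
Set Implicit Arguments. Unset Strict Implicit. Unset Printing Implicit Defensive.
Import Order.TTheory GRing.Theory Num.Theory.
Local Open Scope classical_set_scope.
Local Open Scope ring_scope.

Definition Ptsk {R : realType} (n t s k : nat) : R :=
  (\sum_(s <= i < (minn k (n - t + s)).+1)
      ('C(i.-1, s.-1) * 'C(n - i, t - s))%:R) / ('C(n, t))%:R.

Definition tri_sum {R : realType} (m : nat) (f : nat -> nat -> R) : R :=
  \sum_(1 <= t < m.+1) \sum_(1 <= s < t.+1) f t s.

(* Feasibility of (x, gamma) for (LP)_{n,p,q}; x is indexed by t in [n], s in [t]
   (values of x outside that range play no role). *)
Definition LP_feasible {R : realType} (n : nat) (p : R) (q : nat)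
    (x : nat -> nat -> R) (gamma : R) : Prop :=
  (forall t s, (1 <= s)%N -> (s <= t)%N -> (t <= n)%N -> 0 <= x t s) /\
  (forall t s, (1 <= s)%N -> (s <= t)%N -> (t <= n)%N ->
     x t s <= (t%:R)^-1 * (1 - p * tri_sum t.-1 x)) /\
  (forall k, (1 <= k)%N -> (k <= q)%N ->
     gamma <= p / (1 - (1 - p) ^+ k) * tri_sum n (fun t s => x t s * Ptsk n t s k)).

Definition gamma_star {R : realType} (n : nat) (p : R) (q : nat) : R :=
  sup [set g : R | exists x, LP_feasible n p q x g].

(* Main.v *)
Require Import Defs.
From HB Require Import structures.
From mathcomp Require Import all_boot all_order all_algebra.
From mathcomp Require Import all_classical all_reals.
Import Order.TTheory GRing.Theory Num.Theory.
Local Open Scope ring_scope.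

Section H.
Variable R : realType.

Lemma tri_sum_le m (f g : nat -> nat -> R) :
  (forall t s, (1 <= s)%N -> (s <= t)%N -> (t <= m)%N -> f t s <= g t s) ->
  tri_sum m f <= tri_sum m g.
Proof.
move=> H; rewrite /tri_sum; apply: ler_sum_nat => t /andP[t1 tm].
apply: ler_sum_nat => s /andP[s1 st]; apply: H => //.
Qed.

Lemma Ptsk_ge0 n t s k : 0 <= Ptsk n t s k :> R.
Proof. rewrite /Ptsk; apply: divr_ge0 => //; apply: sumr_ge0 => i _; exact: ler0n. Qed.

Lemma Ptsk_mono n t s k k' : (k <= k')%N -> Ptsk n t s k <= Ptsk n t s k' :> R.
Proof.
move=> kk; rewrite /Ptsk; apply: ler_wpM2r; first by rewrite invr_ge0.
set a := minn k _; set b := minn k' _.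
have ab : (a <= b)%N.
  by rewrite /a /b leq_min geq_minr andbT; exact: leq_trans (geq_minl _ _) kk.
case: (leqP s a.+1) => sa.
  rewrite (@big_cat_nat _ _ _ a.+1 s b.+1) //=.
  by rewrite lerDl; apply: sumr_ge0 => i _; exact: ler0n.
rewrite big_geq ?(ltnW sa) //; apply: sumr_ge0 => i _; exact: ler0n.
Qed.

Lemma geom_pos (p : R) k : 0 < p -> p <= 1 -> (1 <= k)%N ->
  0 < 1 - (1 - p) ^+ k /\ 1 - (1 - p) ^+ k <= 1.
Proof.
move=> p0 p1 k1; have h0 : 0 <= 1 - p by rewrite subr_ge0.
have h1 : 1 - p < 1 by rewrite ltrBlDr ltrDl.
split.
  by rewrite subr_gt0 expr_lt1.
by rewrite lerBlDr lerDl exprn_ge0.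
Qed.

Lemma tri_sum_ge0 m (f : nat -> nat -> R) :
  (forall t s, (1 <= s)%N -> (s <= t)%N -> (t <= m)%N -> 0 <= f t s) ->
  0 <= tri_sum m f.
Proof.
move=> H; have -> : 0 = tri_sum m (fun _ _ => 0 : R).
  by rewrite /tri_sum big1 // => t _; rewrite big1.
exact: tri_sum_le.
Qed.

Lemma feas_transfer n (p : R) q x g : 0 < p -> p <= 1 -> (1 <= q)%N -> (q <= n)%N ->
  LP_feasible n p q x g -> LP_feasible n p n x ((1 - (1 - p) ^+ q) * g).
Proof.
move=> p0 p1 q1 qn [H0 [H1 H2]]; split => //; split => // k k1 kn.
have [c0 c1] := geom_pos p q p0 p1 q1.
have [d0 d1] := geom_pos p k p0 p1 k1.
set S := fun k => tri_sum n (fun t s => x t s * Ptsk n t s k).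
have S0 : forall k, 0 <= S k.
  move=> k'; apply: tri_sum_ge0 => t s ?? ?; apply: mulr_ge0; [exact: H0|exact: Ptsk_ge0].
rewrite -/(S k).
case: (leqP k q) => kq.
  have := H2 k k1 kq; rewrite -/(S k) => hk.
  have R0 : 0 <= p / (1 - (1 - p) ^+ k) * S k.
    by apply: mulr_ge0 => //; apply: divr_ge0; [exact: ltW|exact: ltW].
  case: (lerP 0 g) => g0.
    apply: le_trans hk; rewrite -[leRHS]mul1r; exact: ler_wpM2r.
  apply: le_trans R0; exact: mulr_ge0_le0 (ltW c0) (ltW g0).
have Sqk : S q <= S k.
  apply: tri_sum_le => t s ???; apply: ler_wpM2l; first exact: H0.
  exact: Ptsk_mono (ltnW kq).
have e1 : p * S k <= p / (1 - (1 - p) ^+ k) * S k.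
  apply: ler_wpM2r => //; rewrite ler_pdivlMr //; exact: ler_piMr (ltW p0) d1.
apply: le_trans e1; apply: le_trans (ler_wpM2l (ltW p0) Sqk).
have := H2 q q1 (leqnn q); rewrite -/(S q) => hq.
apply: le_trans (ler_wpM2l (ltW c0) hq) _.
rewrite mulrA mulrCA divff ?mulr1 //; exact: lt0r_neq0.
Qed.

Lemma feas_x_le1 n (p : R) q x g : 0 < p -> LP_feasible n p q x g ->
  forall t s, (1 <= s)%N -> (s <= t)%N -> (t <= n)%N -> x t s <= 1.
Proof.
move=> p0 [H0 [H1 _]] t s s1 st tn.
apply: le_trans (H1 t s s1 st tn) _.
have t1 : (0 < t)%N by exact: leq_trans s1 st.
have T0 : 0 <= tri_sum t.-1 x.
  apply: tri_sum_ge0 => a b b1 ba at1; apply: H0 => //.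
  by apply: leq_trans at1 _; rewrite (leq_trans (leq_pred t)).
have ti0 : 0 <= (t%:R : R)^-1 by rewrite invr_ge0.
apply: le_trans (ler_wpM2l ti0 (_ : 1 - p * tri_sum t.-1 x <= 1)) _.
  by rewrite lerBlDr lerDl; apply: mulr_ge0 => //; exact: ltW.
rewrite mulr1 invr_le1 ?ler1n ?unitfE ?pnatr_eq0 -?lt0n //.
by rewrite ltr0n.
Qed.

Lemma feas_bound n (p : R) x g : 0 < p -> p <= 1 -> (1 <= n)%N -> LP_feasible n p n x g ->
  g <= tri_sum n (fun t s => Ptsk n t s 1).
Proof.
move=> p0 p1 n1 F; have Hx := @feas_x_le1 _ _ _ _ _ p0 F.
case: F => [H0 [H1 H2]].
apply: le_trans (H2 1%N (leqnn 1) n1) _.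
rewrite expr1 opprB addrC subrK divff ?mul1r ?lt0r_neq0 //.
apply: tri_sum_le => t s s1 st tn; rewrite -[leRHS]mul1r; apply: ler_wpM2r.
  exact: Ptsk_ge0.
exact: Hx.
Qed.

Lemma feas0 n (p : R) q : LP_feasible n p q (fun _ _ => 0) 0.
Proof.
have Z : forall m, tri_sum m (fun _ _ => 0 : R) = 0.
  by move=> m; rewrite /tri_sum big1 // => t _; rewrite big1.
split => //; split.
  by move=> t s ???; rewrite Z mulr0 subr0 mulr1 invr_ge0.
move=> k ??; rewrite /tri_sum big1 ?mulr0 // => t _.
by rewrite big1 // => s _; rewrite mul0r.
Qed.
End H.

Theorem mainTheorem13 (R : realType) (n : nat) (p : R) (q : nat) :
  (1 <= n)%N -> 0 < p -> p <= 1 -> (1 <= q)%N -> (q <= n)%N ->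
  (1 - (1 - p) ^+ q) * gamma_star n p q <= gamma_star n p n.
Proof.
move=> n1 p0 p1 q1 qn; have [c0 c1] := @geom_pos R p q p0 p1 q1.
rewrite /gamma_star.
have hB : has_sup [set g : R | exists x, LP_feasible n p n x g]%classic.
  split; first by exists 0; exists (fun _ _ => 0); exact: feas0.
  exists (tri_sum n (fun t s => Ptsk n t s 1)) => g [x F].
  exact: (@feas_bound _ _ _ _ _ p0 p1 n1 F).
rewrite mulrC -ler_pdivlMr //; apply: ge_sup.
  by exists 0; exists (fun _ _ => 0); exact: feas0.
move=> g [x F]; rewrite ler_pdivlMr // mulrC.
apply: sup_upper_bound => //; exists x; exact: feas_transfer.
Qed.
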